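(* Let $A,B,C,D,E\in\mathbb{C}$ with $E\neq0$ and $M=\{(x,y,z)\in\mathbb{C}^3 : x^2+y^2+z^2+Exyz-Ax-By-Cz-D=0\}$. The vector fields \begin{align*} V^x&=(2z+Exy-C)\tfrac{\partial}{\partial y}-(2y+Exz-B)\tfrac{\partial}{\partial z},\\ V^y&=-(2z+Exy-C)\tfrac{\partial}{\partial x}+(2x+Eyz-A)\tfrac{\partial}{\partial z},\\ V^z&=(2y+Exz-B)\tfrac{\partial}{\partial x}-(2x+Eyz-A)\tfrac{\partial}{\partial y} \end{align*} are tangent to $M$, and each of them is complete on $M$ (its flow exists for all complex times). *)

(* Defs.v *)
From Stdlib Require Import Reals.
From Coquelicot Require Import Coquelicot.
Open Scope C_scope.

Definition pt := (C * C * C)%type.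

Definition Fcubic (a b c d e : C) (p : pt) : C :=
  let '(x, y, z) := p in
  x * x + y * y + z * z + e * x * y * z - a * x - b * y - c * z - d.

Definition onM (a b c d e : C) (p : pt) : Prop := Fcubic a b c d e p = 0.

(* vector fields, as maps C^3 -> C^3 (components along d/dx, d/dy, d/dz) *)
Definition Vx (a b c d e : C) (p : pt) : pt :=
  let '(x, y, z) := p in
  ((0:C), 2 * z + e * x * y - c, - (2 * y + e * x * z - b)).
Definition Vy (a b c d e : C) (p : pt) : pt :=
  let '(x, y, z) := p in
  (- (2 * z + e * x * y - c), (0:C), 2 * x + e * y * z - a).
Definition Vz (a b c d e : C) (p : pt) : pt :=
  let '(x, y, z) := p in
  (2 * y + e * x * z - b, - (2 * x + e * y * z - a), (0:C)).

Definition ptadd (p q : pt) : pt :=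
  let '(x, y, z) := p in let '(x', y', z') := q in (x + x', y + y', z + z').
Definition ptscale (s : C) (p : pt) : pt :=
  let '(x, y, z) := p in (s * x, s * y, s * z).

(* V is tangent to M: at every p in M, the derivative of F along V(p)
   vanishes, i.e. d/ds F(p + s V(p)) at s = 0 is 0 (dF_p(V(p)) = 0). *)
Definition tangent_to_M (a b c d e : C) (V : pt -> pt) : Prop :=
  forall p : pt, onM a b c d e p ->
    is_derive (fun s : C => Fcubic a b c d e (ptadd p (ptscale s (V p)))) (0:C) (0:C).

Definition entire_integral_curve (V : pt -> pt) (g : C -> pt) : Prop :=
  forall t : C,
    is_derive (fun s => fst (fst (g s))) t (fst (fst (V (g t)))) /\
    is_derive (fun s => snd (fst (g s))) t (snd (fst (V (g t)))) /\
    is_derive (fun s => snd (g s)) t (snd (V (g t))).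

Definition complete_on_M (a b c d e : C) (V : pt -> pt) : Prop :=
  forall p : pt, onM a b c d e p ->
    exists g : C -> pt, g (0:C) = p /\ entire_integral_curve V g /\
      (forall t : C, onM a b c d e (g t)).

(* Main.v *)
Require Import Defs.
From Stdlib Require Import Reals.
From Coquelicot Require Import Coquelicot.
From Stdlib Require Import Lra.
Open Scope C_scope.
Open Scope C_scope.

Definition cexp (z : C) : C := ((exp (fst z) * cos (snd z))%R, (exp (fst z) * sin (snd z))%R).

Lemma cexp_add x y : cexp (x + y) = cexp x * cexp y.
Proof.
  destruct x as [a b], y as [c d]; unfold cexp, Cplus, Cmult; simpl.
  rewrite exp_plus, cos_plus, sin_plus. f_equal; ring.
Qed.

Open Scope R_scope.
Lemma dpl_bound f x l : derivable_pt_lim f x l -> forall e, 0 < e ->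
  exists d : posreal, forall h, Rabs h < d -> (Rabs (f (x+h) - f x - h*l) <= e * Rabs h)%R.
Proof.
  intros H e He. destruct (H e He) as [d Hd]. exists d. intros h Hh.
  destruct (Req_dec h 0) as [->|Hn].
  - rewrite Rplus_0_r. replace (f x - f x - 0 * l)%R with 0%R by ring.
    rewrite Rabs_R0; lra.
  - specialize (Hd h Hn Hh).
    replace (f (x + h) - f x - h * l)%R with (h * ((f (x + h) - f x) / h - l))%R by (field; auto).
    rewrite Rabs_mult. rewrite (Rmult_comm e). apply Rmult_le_compat_l; [apply Rabs_pos|lra].
Qed.

Lemma Cmod_le2 (u : C) B : Rabs (fst u) <= B -> Rabs (snd u) <= B -> Cmod u <= 2 * B.
Proof.
  intros H1 H2. eapply Rle_trans. apply Cmod_2Rmax.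
  assert (Hm : Rmax (Rabs (fst u)) (Rabs (snd u)) <= B) by (apply Rmax_lub; auto).
  assert (0 <= Rmax (Rabs (fst u)) (Rabs (snd u))) by (eapply Rle_trans; [apply Rabs_pos| apply Rmax_l]).
  assert (Hs : sqrt 2 * sqrt 2 = 2) by (apply sqrt_sqrt; lra).
  assert (0 <= sqrt 2) by apply sqrt_pos.
  assert (sqrt 2 <= 2) by nra.
  nra.
Qed.

Open Scope C_scope.
Lemma cexp_d0 : @is_derive C_AbsRing C_NormedModule cexp (0:C) (1:C).
Proof.
  split. apply is_linear_scal_l.
  intros x Hx. apply (@is_filter_lim_locally_unique C_AbsRing (AbsRing_NormedModule C_AbsRing)) in Hx. subst x.
  intros eps.
  set (e1 := (Rmin eps 1 / 16)%R).
  assert (He1 : 0 < e1) by (unfold e1; pose proof (cond_pos eps); unfold Rmin; destruct Rle_dec; lra).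
  assert (He1' : e1 <= 1/16) by (unfold e1; unfold Rmin; destruct Rle_dec; lra).
  assert (He1'' : 16 * e1 <= eps) by (unfold e1; unfold Rmin; destruct Rle_dec; lra).
  destruct (dpl_bound _ _ _ (derivable_pt_lim_exp 0) e1 He1) as [d1 H1].
  destruct (dpl_bound _ _ _ (derivable_pt_lim_cos 0) e1 He1) as [d2 H2].
  destruct (dpl_bound _ _ _ (derivable_pt_lim_sin 0) e1 He1) as [d3 H3].
  assert (Hd : 0 < Rmin (Rmin d1 d2) (Rmin d3 (e1/2))).
  { repeat apply Rmin_pos; try apply cond_pos; lra. }
  exists (mkposreal _ Hd). intros [a b] Hab. simpl in Hab.
  unfold ball in Hab; simpl in Hab. unfold AbsRing_ball, abs, minus, plus, opp in Hab; simpl in Hab.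
  replace ((a, b) + - 0) with ((a,b):C) in Hab by (apply injective_projections; simpl; ring).
  assert (Hy : Rmax (Rabs a) (Rabs b) <= Cmod (a, b)) by apply (Rmax_Cmod (a,b)).
  assert (Hya : Rabs a <= Cmod (a,b)) by (eapply Rle_trans; [apply Rmax_l|exact Hy]).
  assert (Hyb : Rabs b <= Cmod (a,b)) by (eapply Rle_trans; [apply Rmax_r|exact Hy]).
  assert (Ha : Rabs a < Rmin (Rmin d1 d2) (Rmin d3 (e1 / 2))) by lra.
  assert (Hb : Rabs b < Rmin (Rmin d1 d2) (Rmin d3 (e1 / 2))) by lra.
  assert (Ha1 : Rabs a < d1) by (eapply Rlt_le_trans; [apply Ha|]; eapply Rle_trans; apply Rmin_l).
  assert (Hb2 : Rabs b < d2) by (eapply Rlt_le_trans; [apply Hb|]; eapply Rle_trans; [apply Rmin_l| apply Rmin_r]).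
  assert (Hb3 : Rabs b < d3) by (eapply Rlt_le_trans; [apply Hb|]; eapply Rle_trans; [apply Rmin_r| apply Rmin_l]).
  assert (Ha4 : Rabs a < e1/2) by (eapply Rlt_le_trans; [apply Ha|]; eapply Rle_trans; [apply Rmin_r| apply Rmin_r]).
  specialize (H1 a Ha1). specialize (H2 b Hb2). specialize (H3 b Hb3).
  rewrite Rplus_0_l, exp_0, Rmult_1_r in H1.
  rewrite Rplus_0_l, cos_0, sin_0 in H2. rewrite Rplus_0_l, sin_0, cos_0 in H3.
  replace (b * - 0)%R with 0%R in H2 by ring. rewrite Rminus_0_r in H2. rewrite Rmult_1_r in H3.
  rewrite Rminus_0_r in H3.
  assert (Hea : exp a <= 3).
  { eapply Rle_trans; [|apply exp_le_3]. left; apply exp_increasing. apply Rabs_def2 in Ha4 as [? ?]. lra. }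
  assert (Hep : 0 < exp a) by apply exp_pos.
  change (Cmod (cexp (a,b) - cexp 0 - (((a,b) - 0) * 1)) <= eps * Cmod ((a,b) - 0)).
  replace ((a,b) - 0) with ((a,b) : C) by (apply injective_projections; simpl; ring).
  replace (cexp (a, b) - cexp 0 - (a, b) * 1) with
    (((exp a * (cos b - 1) + (exp a - 1 - a))%R, (exp a * (sin b - b) + (exp a - 1) * b)%R) : C).
  2:{ unfold cexp; apply injective_projections; simpl; rewrite exp_0; try rewrite cos_0; try rewrite sin_0; ring. }
  eapply Rle_trans. apply (Cmod_le2 _ (8 * e1 * Cmod (a,b))); simpl.
  - eapply Rle_trans. apply Rabs_triang. rewrite Rabs_mult, (Rabs_right (exp a)) by lra.
    assert (Rabs (exp a - 1 - a) <= e1 * Rabs a) by exact H1.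
    assert (0 <= Rabs (cos b - 1)) by apply Rabs_pos.
    nra.
  - eapply Rle_trans. apply Rabs_triang. rewrite !Rabs_mult, (Rabs_right (exp a)) by lra.
    assert (Rabs (exp a - 1) <= e1).
    { replace (exp a - 1)%R with ((exp a - 1 - a) + a)%R by ring.
      eapply Rle_trans. apply Rabs_triang. nra. }
    assert (0 <= Rabs (sin b - b)) by apply Rabs_pos.
    assert (0 <= Rabs (exp a - 1)) by apply Rabs_pos.
    assert (0 <= Rabs b) by apply Rabs_pos.
    nra.
  - assert (0 <= Cmod (a,b)) by apply Cmod_ge_0. nra.
Qed.
Open Scope C_scope.

Lemma tr1 (f : C -> C) x a : @is_derive C_AbsRing C_NormedModule f x a -> @is_derive C_AbsRing (AbsRing_NormedModule C_AbsRing) f x a.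
Proof. intros [Hl Hd]. split.
- destruct Hl as [H1 H2 [M [HM H3]]]. split; auto. exists M; split; auto.
- intros y Hy eps. apply (Hd y Hy eps).
Qed.
Lemma tr2 (f : C -> C) x a : @is_derive C_AbsRing (AbsRing_NormedModule C_AbsRing) f x a -> @is_derive C_AbsRing C_NormedModule f x a.
Proof. intros [Hl Hd]. split.
- destruct Hl as [H1 H2 [M [HM H3]]]. split; auto. exists M; split; auto.
- intros y Hy eps. apply (Hd y Hy eps).
Qed.

Notation CD f x l := (@is_derive C_AbsRing C_NormedModule f x l).

Lemma Cd_plus (f g : C -> C) x a b : CD f x a -> CD g x b -> CD (fun t => f t + g t) x (a + b).
Proof. intros. exact (is_derive_plus f g x a b H H0). Qed.
Lemma Cd_mult (f g : C -> C) x a b : CD f x a -> CD g x b -> CD (fun t => f t * g t) x (a * g x + f x * b).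
Proof. intros. apply tr2. exact (is_derive_mult f g x a b (tr1 _ _ _ H) (tr1 _ _ _ H0) Cmult_comm). Qed.
Lemma Cd_minus (f g : C -> C) x a b : CD f x a -> CD g x b -> CD (fun t => f t - g t) x (a - b).
Proof. intros. exact (is_derive_minus f g x a b H H0). Qed.
Lemma Cd_opp (f : C -> C) x a : CD f x a -> CD (fun t => - f t) x (- a).
Proof. intros. exact (is_derive_opp f x a H). Qed.
Lemma Cd_const (c x : C) : CD (fun _ => c) x (0:C).
Proof. exact (is_derive_const c x). Qed.
Lemma Cd_id (x : C) : CD (fun t => t) x (1:C).
Proof. replace (1:C) with (@one C_Ring). apply tr2; exact (is_derive_id x). apply injective_projections; simpl; try reflexivity. Qed.
Lemma Cd_comp (f g : C -> C) x a b : CD f (g x) a -> CD g x b -> CD (fun t => f (g t)) x (b * a).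
Proof. intros. exact (is_derive_comp f g x a b H (tr1 _ _ _ H0)). Qed.
Lemma Cd_val (f : C -> C) x l l' : CD f x l' -> l' = l -> CD f x l.
Proof. intros H ->; exact H. Qed.
Lemma Cd_ext (f g : C -> C) x l : (forall t, f t = g t) -> CD f x l -> CD g x l.
Proof. intros. exact (is_derive_ext f g x l H H0). Qed.

Ltac cring := cbv beta; match goal with |- @eq _ ?a ?b => change (@eq C a b) end; ring.
Ltac cfield := cbv beta; match goal with |- @eq _ ?a ?b => change (@eq C a b) end; field.

Lemma cexp_0 : cexp 0 = 1.
Proof. unfold cexp; simpl. rewrite exp_0, cos_0, sin_0. apply injective_projections; simpl; ring. Qed.

Lemma cexp_d z : CD cexp z (cexp z).
Proof.
  apply (Cd_ext (fun t => cexp z * cexp (t - z))).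
  { intros t. rewrite <- cexp_add. f_equal. ring. }
  eapply Cd_val. apply Cd_mult. apply Cd_const.
  apply (Cd_comp cexp (fun t => t - z)). replace (z - z) with (0:C) by ring. apply cexp_d0.
  eapply Cd_val. apply Cd_minus. apply Cd_id. apply Cd_const. reflexivity.
  cring.
Qed.

Lemma cexp_lin w x : CD (fun t => cexp (w * t)) x (w * cexp (w * x)).
Proof.
  eapply Cd_val. apply (Cd_comp cexp (fun t => w * t)). apply cexp_d.
  eapply Cd_val. apply Cd_mult. apply Cd_const. apply Cd_id. reflexivity. cring.
Qed.

Lemma cexp_opp z : cexp z * cexp (- z) = 1.
Proof. rewrite <- cexp_add. replace (z + - z) with (0:C) by ring. apply cexp_0. Qed.

Lemma cexp_nz z : cexp z <> 0.
Proof. intros H. pose proof (cexp_opp z) as H'. rewrite H, Cmult_0_l in H'. apply C1_nz. auto. Qed.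

Lemma Csqrt_ex (w : C) : exists s : C, s * s = w.
Proof.
  destruct w as [u v].
  set (r := sqrt (u*u + v*v)).
  assert (Hr0 : (0 <= r)%R) by apply sqrt_pos.
  assert (Hr2 : (r * r = u*u + v*v)%R) by (apply sqrt_sqrt; nra).
  assert (Hru : (Rabs u <= r)%R).
  { rewrite <- (Rabs_pos_eq r) by auto. apply Rsqr_le_abs_0. unfold Rsqr. nra. }
  apply Rabs_le_between in Hru as [Hru1 Hru2].
  set (s1 := sqrt ((r + u)/2)). set (s2 := sqrt ((r - u)/2)).
  assert (H1 : (s1 * s1 = (r+u)/2)%R) by (apply sqrt_sqrt; lra).
  assert (H2 : (s2 * s2 = (r-u)/2)%R) by (apply sqrt_sqrt; lra).
  assert (H12 : (s1 * s2 = Rabs v / 2)%R).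
  { unfold s1, s2. rewrite <- sqrt_mult by lra.
    replace ((r + u) / 2 * ((r - u) / 2))%R with ((Rabs v / 2) * (Rabs v / 2))%R.
    apply sqrt_square. pose proof (Rabs_pos v); lra.
    assert (Hv : (Rabs v * Rabs v = v * v)%R) by (rewrite <- Rabs_mult; apply Rabs_pos_eq; nra).
    nra. }
  destruct (Rle_dec 0 v) as [Hv|Hv].
  - exists (s1, s2). unfold Cmult; simpl. rewrite Rabs_pos_eq in H12 by auto.
    apply injective_projections; simpl; nra.
  - exists (s1, (- s2)%R). unfold Cmult; simpl. rewrite Rabs_left in H12 by lra.
    apply injective_projections; simpl; nra.
Qed.
Open Scope C_scope.

Ltac cder :=
  match goal with
  | |- CD (fun _ => ?c) _ _ => apply Cd_const
  | |- CD (fun t => t) _ _ => apply Cd_id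
  | |- CD (fun t => cexp (?w * t)) _ _ => apply cexp_lin
  | |- CD (fun t => @?f t + @?g t) _ _ => apply (Cd_plus f g); cder
  | |- CD (fun t => @?f t - @?g t) _ _ => apply (Cd_minus f g); cder
  | |- CD (fun t => @?f t * @?g t) _ _ => apply (Cd_mult f g); cder
  | |- CD (fun t => - @?f t) _ _ => apply (Cd_opp f); cder
  end.

Definition G2 (k be ga y z : C) : C := y*y + z*z + k*y*z - be*y - ga*z.

Definition Flow2 (k be ga y0 z0 : C) : Prop :=
  exists Y1 Y2 : C -> C, Y1 0 = y0 /\ Y2 0 = z0 /\
   (forall t, CD Y1 t (2 * Y2 t + k * Y1 t - ga)) /\
   (forall t, CD Y2 t (-(2 * Y1 t + k * Y2 t - be))) /\
   (forall t, G2 k be ga (Y1 t) (Y2 t) = G2 k be ga y0 z0).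

Lemma cexp_neg w t : cexp ((- w) * t) = / cexp (w * t).
Proof.
  pose proof (cexp_opp (w * t)) as H. pose proof (cexp_nz (w*t)).
  replace ((-w) * t) with (- (w * t)) by ring.
  rewrite <- (Cmult_1_l (/ cexp (w*t))), <- H. field. auto.
Qed.

Lemma flow2_gen (l be ga y0 z0 : C) : l <> 0 -> l - / l <> 0 -> Flow2 (l + / l) be ga y0 z0.
Proof.
  intros Hl Hw.
  assert (Hl2 : l * l - 1 <> 0).
  { intro Hc. apply Hw. replace (l - / l) with ((l * l - 1) / l) by (field; auto). rewrite Hc. field. auto. }
  set (k := l + / l). set (w := l - / l).
  set (P1 := (ga * k - 2 * be) / (w * w)). set (P2 := (k * be - 2 * ga) / (w * w)).
  set (U1 := y0 - P1). set (U2 := z0 - P2).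
  set (N1 := k * U1 + 2 * U2). set (N2 := -2 * U1 - k * U2).
  set (a1 := (U1 + N1 / w) / 2). set (a2 := (U2 + N2 / w) / 2).
  set (d1 := (U1 - N1 / w) / 2). set (d2 := (U2 - N2 / w) / 2).
  exists (fun t => P1 + a1 * cexp (w * t) + d1 * cexp ((- w) * t)).
  exists (fun t => P2 + a2 * cexp (w * t) + d2 * cexp ((- w) * t)).
  split; [|split; [|split; [|split]]].
  - rewrite !Cmult_0_r, cexp_0. unfold a1, d1, U1. field. auto.
  - rewrite !Cmult_0_r, cexp_0. unfold a2, d2, U2. field. auto.
  - intros t. eapply Cd_val. cder. cbv beta.
    unfold a1, a2, d1, d2, N1, N2, U1, U2, P1, P2, k, w. cfield.
    split; auto.
  - intros t. eapply Cd_val. cder. cbv beta.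
    unfold a1, a2, d1, d2, N1, N2, U1, U2, P1, P2, k, w. cfield.
    split; auto.
  - intros t. rewrite cexp_neg. pose proof (cexp_nz (w * t)).
    set (E := cexp (w * t)) in *. clearbody E.
    unfold G2, a1, a2, d1, d2, N1, N2, U1, U2, P1, P2, k, w. field.
    split; auto.
Qed.

Lemma flow2_deg (k be ga y0 z0 : C) : k * k - 4 = 0 -> Flow2 k be ga y0 z0.
Proof.
  intros Hk.
  assert (Hk' : k = 2 \/ k = -2).
  { destruct (Ceq_dec (k - 2) 0) as [H|H].
    - left. transitivity ((k - 2) + 2); [ring| rewrite H; ring].
    - destruct (Ceq_dec (k + 2) 0) as [H'|H'].
      + right. transitivity ((k + 2) - 2); [ring| rewrite H'; ring].
      + exfalso. apply (Cmult_neq_0 _ _ H H'). rewrite <- Hk. ring. }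
  set (m1 := k * y0 + 2 * z0 - ga). set (m2 := -2 * y0 - k * z0 + be).
  set (n1 := - k * ga + 2 * be). set (n2 := 2 * ga - k * be).
  exists (fun t => y0 + t * m1 + t * t * (n1 / 2)).
  exists (fun t => z0 + t * m2 + t * t * (n2 / 2)).
  split; [|split; [|split; [|split]]].
  - cfield.
  - cring.
  - intros t. eapply Cd_val. cder. unfold m1, m2, n1, n2.
    destruct Hk' as [-> | ->]; cfield.
  - intros t. eapply Cd_val. cder. unfold m1, m2, n1, n2.
    destruct Hk' as [-> | ->]; cfield.
  - intros t. unfold G2, m1, m2, n1, n2.
    destruct Hk' as [-> | ->]; field.
Qed.

Lemma flow2 (k be ga y0 z0 : C) : Flow2 k be ga y0 z0.
Proof.
  destruct (Ceq_dec (k * k - 4) 0) as [H|H].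
  - apply flow2_deg; auto.
  - destruct (Csqrt_ex (k * k - 4)) as [s Hs].
    assert (Hs0 : s <> 0) by (intro; subst; apply H; rewrite <- Hs; ring).
    set (l := (k + s) / 2).
    assert (Hl1 : l * (k - l) = 1) by (unfold l; transitivity ((k*k - s*s)/4); [field| rewrite Hs; field]).
    assert (Hl : l <> 0) by (intro Hc; rewrite Hc in Hl1; apply C1_nz; rewrite <- Hl1; ring).
    assert (Hi : / l = k - l) by (rewrite <- (Cmult_1_l (/ l)), <- Hl1; field; auto).
    assert (Hk : k = l + / l) by (rewrite Hi; ring).
    assert (Hw : l - / l <> 0).
    { rewrite Hi. unfold l. replace ((k + s) / 2 - (k - (k + s) / 2)) with s by field. auto. }
    rewrite Hk. apply flow2_gen; auto.
Qed.
Open Scope C_scope.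

Lemma Fx a b c d e x y z : Fcubic a b c d e (x,y,z) = x*x - a*x - d + G2 (e*x) b c y z.
Proof. unfold Fcubic, G2. ring. Qed.
Lemma Fy a b c d e x y z : Fcubic a b c d e (x,y,z) = y*y - b*y - d + G2 (e*y) c a z x.
Proof. unfold Fcubic, G2. ring. Qed.
Lemma Fz a b c d e x y z : Fcubic a b c d e (x,y,z) = z*z - c*z - d + G2 (e*z) a b x y.
Proof. unfold Fcubic, G2. ring. Qed.

Theorem lemma2p1 (a b c d e : C) (he : e <> 0) :
  tangent_to_M a b c d e (Vx a b c d e) /\
  tangent_to_M a b c d e (Vy a b c d e) /\
  tangent_to_M a b c d e (Vz a b c d e) /\
  complete_on_M a b c d e (Vx a b c d e) /\
  complete_on_M a b c d e (Vy a b c d e) /\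
  complete_on_M a b c d e (Vz a b c d e).
Proof.
  split; [|split; [|split; [|split; [|split]]]].
  - intros [[x y] z] _. cbn [Fcubic ptadd ptscale Vx]. eapply Cd_val. cder. cring.
  - intros [[x y] z] _. cbn [Fcubic ptadd ptscale Vy]. eapply Cd_val. cder. cring.
  - intros [[x y] z] _. cbn [Fcubic ptadd ptscale Vz]. eapply Cd_val. cder. cring.
  - intros [[x0 y0] z0] Hp.
    destruct (flow2 (e*x0) b c y0 z0) as (Y1 & Y2 & H0 & H0' & HD1 & HD2 & HG).
    exists (fun t => (x0, Y1 t, Y2 t)). split; [|split].
    + rewrite H0, H0'. reflexivity.
    + intros t. cbn [Vx fst snd]. split; [|split].
      * apply Cd_const.
      * eapply Cd_val. apply HD1. cring.
      * eapply Cd_val. apply HD2. cring.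
    + intros t. unfold onM in *. rewrite Fx, HG, <- Fx. exact Hp.
  - intros [[x0 y0] z0] Hp.
    destruct (flow2 (e*y0) c a z0 x0) as (Y1 & Y2 & H0 & H0' & HD1 & HD2 & HG).
    exists (fun t => (Y2 t, y0, Y1 t)). split; [|split].
    + rewrite H0, H0'. reflexivity.
    + intros t. cbn [Vy fst snd]. split; [|split].
      * eapply Cd_val. apply HD2. cring.
      * apply Cd_const.
      * eapply Cd_val. apply HD1. cring.
    + intros t. unfold onM in *. rewrite Fy, HG, <- Fy. exact Hp.
  - intros [[x0 y0] z0] Hp.
    destruct (flow2 (e*z0) a b x0 y0) as (Y1 & Y2 & H0 & H0' & HD1 & HD2 & HG).
    exists (fun t => (Y1 t, Y2 t, z0)). split; [|split].
    + rewrite H0, H0'. reflexivity.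
    + intros t. cbn [Vz fst snd]. split; [|split].
      * eapply Cd_val. apply HD1. cring.
      * eapply Cd_val. apply HD2. cring.
      * apply Cd_const.
    + intros t. unfold onM in *. rewrite Fz, HG, <- Fz. exact Hp.
Qed.
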